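(* Let $a,b,c\in\mathbb{RP}^1$ be distinct. Let $U=(u_1,\dots,u_6)$ be a 6-tuple of nonzero vectors in $\mathbb R^2$ with $[u_1]=[u_2]=[u_3]=a$ and $[u_4]=[u_5]=[u_6]=b$ (so its configuration is $3\cdot\{a,b\}$), and let $U'=(u'_1,\dots,u'_6)$ be a 6-tuple of nonzero vectors with $[u'_1]=[u'_2]=[u'_3]=a$, $[u'_4]=[u'_5]=b$ and $[u'_6]=c$ (configuration $\{3\cdot a,2\cdot b,c\}$). Then $\Phi(U)$ and $\Phi(U')$ generate the same ray of $C_{6,2}$.
   Context: $[u]\in\mathbb{RP}^1$ denotes the point determined by a nonzero $u\in\mathbb R^2$. For a 6-tuple $U$ of vectors, $\Phi(U)\in\mathbb R^{15}$ is the vector with coordinates $\mathrm V_{I_1}\mathrm V_{I_2}\mathrm V_{I_3}$ indexed by the 15 partitions $I_1|I_2|I_3$ of $[6]$ into pairs, where $\mathrm V_{\{i,j\}}=\tfrac12|\det(u_i,u_j)|$ is the mixed area of the segments $[0,u_i],[0,u_j]$. $C_{6,2}$ is the conic hull of $\Phi(\mathcal Z_2^6)$, where $\Phi(Z)$ for zonoids $Z=(Z_1,\dots,Z_6)$ in $\mathbb R^2$ is defined in the same way with $\mathrm V_{\{i,j\}}=\mathrm V(Z_i,Z_j)$ the mixed area. *)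

(* Defs.v *)
From mathcomp Require Import all_boot all_order all_algebra.
Set Implicit Arguments. Unset Strict Implicit. Unset Printing Implicit Defensive.
Import Order.TTheory GRing.Theory Num.Theory.
Local Open Scope ring_scope.

Definition det2 {R : ringType} (u v : R * R) : R := u.1 * v.2 - u.2 * v.1.

(* [u] = [v] in RP^1, for nonzero u v: u and v are proportional. *)
Definition same_line {R : ringType} (u v : R * R) : Prop := det2 u v = 0.

Definition nonzero2 {R : ringType} (u : R * R) : Prop := u != (0, 0).

Definition is_pairing (P : {set {set 'I_6}}) : bool :=
  partition P [set: 'I_6] && [forall B in P, #|B| == 2%N].

Definition pairing := {P : {set {set 'I_6}} | is_pairing P}.

(* Mixed area of the segments [0,u_i],[0,u_j] for B = {i,j}. *)
Definition VB {R : realFieldType} (U : 'I_6 -> R * R) (B : {set 'I_6}) : R :=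
  let s := enum B in
  2^-1 * `| det2 (U (nth ord0 s 0)) (U (nth ord0 s 1)) |.

(* Phi(U) in R^15, coordinates indexed by pairings. *)
Definition Phi {R : realFieldType} (U : 'I_6 -> R * R) (P : pairing) : R :=
  \prod_(B in val P) VB U B.

(* Main.v *)
Require Import Defs.
From mathcomp Require Import all_boot all_order all_algebra.
Import Order.TTheory GRing.Theory Num.Theory.
From mathcomp Require Import zify.
Set Implicit Arguments. Unset Strict Implicit.

Definition cross (B : {set 'I_6}) := exists x y : 'I_6, [/\ (x < 3)%N, (3 <= y)%N & B = [set x; y]].
Lemma block2 (P : pairing) B : B \in val P -> exists x y : 'I_6, x != y /\ B = [set x; y].
Proof.
move=> hB; have /andP[_ /forall_inP h] := valP P.
exact/cards2P/h.
Qed.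

Lemma pairing_part (P : pairing) : partition (val P) [set: 'I_6].
Proof. by have /andP[] := valP P. Qed.

Lemma dichot (P : pairing) :
  (exists x y : 'I_6, [/\ x != y, (x < 3)%N, (y < 3)%N & [set x; y] \in val P]) \/
  (forall B, B \in val P -> cross B).
Proof.
case: (boolP [exists x : 'I_6, exists y : 'I_6, [&& x != y, (x < 3)%N, (y < 3)%N & [set x; y] \in val P]]).
  move=> /existsP[x /existsP[y /and4P[h1 h2 h3 h4]]]; left; by exists x, y.
move=> hn; right.
pose c (B : {set 'I_6}) := (\sum_(i in B) ((i < 3)%N : nat))%N.
have cxy (x y : 'I_6) : x != y -> c [set x; y] = ((x < 3)%N + (y < 3)%N)%N.
  by move=> xy; rewrite /c big_setU1 ?big_set1 // inE.
have h1 B : B \in val P -> (c B <= 1)%N.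
  move=> hB; have [x [y [xy eB]]] := block2 hB; rewrite eB cxy //.
  case hx: (x < 3)%N; case hy: (y < 3)%N => //.
  case/negP: hn; apply/existsP; exists x; apply/existsP; exists y.
  by rewrite xy hx hy -eB hB.
have /and3P[/eqP hcov htriv _] := pairing_part P.
have hsum : (\sum_(B in val P) c B = 3)%N.
  rewrite /c -(big_trivIset _ htriv) hcov.
  rewrite (eq_bigl xpredT); last by move=> i; rewrite inE.
  by rewrite !big_ord_recr big_ord0.
have hcard : #|val P| = 3.
  have := card_partition (pairing_part P); rewrite cardsT card_ord.
  rewrite (eq_bigr (fun _ => 2%N)); last first.
    by move=> B hB; have [x [y [xy ->]]] := block2 hB; rewrite cards2 xy.
  rewrite sum_nat_const; lia.
have hs : (\sum_(B in val P) (c B + (1 - c B)) = 3)%N.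
  rewrite (eq_bigr (fun _ => 1%N)); last by move=> B hB; rewrite subnKC // h1.
  by rewrite sum_nat_const hcard.
rewrite big_split /= hsum in hs.
move/eqP: hs; rewrite -[X in _ == X]addn0 eqn_add2l.
rewrite sum_nat_eq0 => /forall_inP h0 B hB.
have := h0 B hB; have := h1 B hB.
have [x [y [xy eB]]] := block2 hB; rewrite eB cxy //.
case hx: (x < 3)%N; case hy: (y < 3)%N => //= _ _.
  by exists x, y; split => //; rewrite leqNgt hy.
by exists y, x; split => //; [rewrite leqNgt hx | rewrite setUC].
Qed.

Definition f3 (i : 'I_6) : nat := (i %% 3)%N.
Definition P0set := preim_partition f3 [set: 'I_6].

Lemma P0key (x : 'I_6) : exists a b : 'I_6,
  [/\ (a < 3)%N, (3 <= b)%N & [set y in [set: 'I_6] | f3 x == f3 y] = [set a; b]].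
Proof.
case: x => [[|[|[|[|[|[|//]]]]]] hx].
- exists (@Ordinal 6 0 isT), (@Ordinal 6 3 isT); split => //; apply/setP => -[[|[|[|[|[|[|//]]]]]] hy]; by rewrite !inE.
- exists (@Ordinal 6 1 isT), (@Ordinal 6 4 isT); split => //; apply/setP => -[[|[|[|[|[|[|//]]]]]] hy]; by rewrite !inE.
- exists (@Ordinal 6 2 isT), (@Ordinal 6 5 isT); split => //; apply/setP => -[[|[|[|[|[|[|//]]]]]] hy]; by rewrite !inE.
- exists (@Ordinal 6 0 isT), (@Ordinal 6 3 isT); split => //; apply/setP => -[[|[|[|[|[|[|//]]]]]] hy]; by rewrite !inE.
- exists (@Ordinal 6 1 isT), (@Ordinal 6 4 isT); split => //; apply/setP => -[[|[|[|[|[|[|//]]]]]] hy]; by rewrite !inE.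
- exists (@Ordinal 6 2 isT), (@Ordinal 6 5 isT); split => //; apply/setP => -[[|[|[|[|[|[|//]]]]]] hy]; by rewrite !inE.
Qed.

Lemma P0cross B : B \in P0set -> cross B.
Proof.
case/imsetP => x _ ->; have [a [b [ha hb e]]] := P0key x.
by exists a, b; split.
Qed.

Lemma P0is : is_pairing P0set.
Proof.
apply/andP; split; first exact: preim_partitionP.
apply/forall_inP => B /P0cross [a [b [ha hb ->]]].
rewrite cards2; have -> // : a != b by apply/eqP => e; move: ha; rewrite e ltnNge hb.
Qed.

Definition P0 : pairing := exist _ P0set P0is.

Local Open Scope ring_scope.
From mathcomp Require Import ring.
Section H.
Variable R : realFieldType.
Implicit Types u v a b : R * R.

Lemma nz_cases a : nonzero2 a -> a.1 != 0 \/ a.2 != 0.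
Proof.
case: a => a1 a2 /=; rewrite /nonzero2.
case: (eqVneq a1 0) => [->|]; last by left.
case: (eqVneq a2 0) => [->|]; last by right.
by rewrite eqxx.
Qed.

Lemma det2_same u v a : nonzero2 a -> same_line u a -> same_line v a -> det2 u v = 0.
Proof.
rewrite /same_line /det2 => /nz_cases ha hu hv.
have e1 : (u.1 * v.2 - u.2 * v.1) * a.1 = v.1 * (u.1 * a.2 - u.2 * a.1) - u.1 * (v.1 * a.2 - v.2 * a.1) by ring.
have e2 : (u.1 * v.2 - u.2 * v.1) * a.2 = v.2 * (u.1 * a.2 - u.2 * a.1) - u.2 * (v.1 * a.2 - v.2 * a.1) by ring.
rewrite hu hv !mulr0 subr0 in e1 e2.
case: ha => h.
  by move/eqP: e1; rewrite mulf_eq0 (negbTE h) orbF => /eqP.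
by move/eqP: e2; rewrite mulf_eq0 (negbTE h) orbF => /eqP.
Qed.

Definition coef u a : R := if a.1 != 0 then u.1 / a.1 else u.2 / a.2.

Lemma coefP u a : nonzero2 a -> same_line u a -> u = (coef u a * a.1, coef u a * a.2).
Proof.
move=> ha; rewrite /same_line /det2 /coef => /eqP; rewrite subr_eq0 => /eqP hu.
case: (eqVneq a.1 0) => h1 /=.
  have h2 : a.2 != 0 by case: (nz_cases ha) => //; rewrite h1 eqxx.
  rewrite h1 mulr0 in hu; move/eqP: hu; rewrite mulf_eq0 (negbTE h2) orbF => /eqP hu1.
  by rewrite h1 mulr0 divfK //; case: u hu1 => u1 u2 /= ->.
rewrite divfK // mulrAC hu mulfK //; by case: u hu.
Qed.

Lemma det2_scale (x y : R) a b : det2 (x * a.1, x * a.2) (y * b.1, y * b.2) = x * y * det2 a b.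
Proof. rewrite /det2 /=; ring. Qed.

Lemma det2_coef u v a b : nonzero2 a -> nonzero2 b -> same_line u a -> same_line v b ->
  det2 u v = coef u a * coef v b * det2 a b.
Proof.
move=> ha hb hu hv.
by rewrite -det2_scale -(coefP ha hu) -(coefP hb hv).
Qed.

Lemma coef_nz u a : nonzero2 a -> same_line u a -> nonzero2 u -> coef u a != 0.
Proof.
move=> ha hu; have e := coefP ha hu; rewrite /nonzero2; apply: contra => /eqP k0.
by rewrite e k0 !mul0r.
Qed.

Lemma det2C u v : det2 v u = - det2 u v.
Proof. rewrite /det2; ring. Qed.

Lemma VB2 (U : 'I_6 -> R * R) (x y : 'I_6) : x != y ->
  VB U [set x; y] = 2^-1 * `|det2 (U x) (U y)|.
Proof.
move=> xy; rewrite /VB.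
have hs : size (enum [set x; y]) = 2%N by rewrite -cardE cards2 xy.
have hu := enum_uniq (mem [set x; y]).
have hm z : (z \in enum [set x; y]) = (z == x) || (z == y) by rewrite mem_enum !inE.
case E: (enum _) hs hu hm => [|p [|q [|r s]]] //= _.
rewrite inE andbT => pq hm.
move: (hm p) (hm q); rewrite !inE !eqxx ?orbT /=.
move=> /esym/orP[]/eqP ep /esym/orP[]/eqP eq; subst p q; rewrite ?eqxx // in pq *; by rewrite det2C normrN.
Qed.

Definition w (U L : 'I_6 -> R * R) (i : 'I_6) : R :=
  if (i < 3)%N then `|coef (U i) (L i)| else `|coef (U i) (L i)| * (2^-1 * `|det2 (L ord0) (L i)|).

Lemma Phi_cross (U L : 'I_6 -> R * R) (P : pairing) :
  (forall i, nonzero2 (L i)) -> (forall i, same_line (U i) (L i)) ->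
  (forall i : 'I_6, (i < 3)%N -> L i = L ord0) ->
  (forall B, B \in val P -> cross B) ->
  Phi U P = \prod_i w U L i.
Proof.
move=> hL hU hL0 hc; rewrite /Phi.
transitivity (\prod_(B in val P) \prod_(i in B) w U L i).
  apply: eq_bigr => B hB; have [x [y [hx hy ->]]] := hc B hB.
  have xy : x != y by apply/eqP => e; move: hx; rewrite e ltnNge hy.
  rewrite VB2 // big_setU1 ?big_set1 /=; last by rewrite inE.
  rewrite /w hx ltnNge hy /= (det2_coef (hL x) (hL y) (hU x) (hU y)) (hL0 x hx).
  rewrite !normrM; ring.
have /and3P[/eqP hcov htriv _] := pairing_part P.
rewrite -big_trivIset // hcov.
by apply: eq_bigl => i; rewrite inE.
Qed.

Lemma w_gt0 (U L : 'I_6 -> R * R) :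
  (forall i, nonzero2 (L i)) -> (forall i, same_line (U i) (L i)) -> (forall i, nonzero2 (U i)) ->
  (forall i : 'I_6, (3 <= i)%N -> det2 (L ord0) (L i) != 0) ->
  0 < \prod_i w U L i.
Proof.
move=> hL hU hU0 hd; apply: prodr_gt0 => i _; rewrite /w.
have hc : 0 < `|coef (U i) (L i)| by rewrite normr_gt0 coef_nz.
case: ltnP => hi //.
by rewrite mulr_gt0 // mulr_gt0 // ?invr_gt0 ?ltr0n // normr_gt0 hd.
Qed.

Lemma Phi_zero (U : 'I_6 -> R * R) a (P : pairing) (x y : 'I_6) :
  nonzero2 a -> same_line (U x) a -> same_line (U y) a -> x != y ->
  [set x; y] \in val P -> Phi U P = 0.
Proof.
move=> ha hx hy xy hB; rewrite /Phi (bigD1 [set x; y]) //= VB2 //.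
by rewrite (det2_same ha hx hy) normr0 mulr0 mul0r.
Qed.
End H.

Theorem lemma7p3 (R : realFieldType) (a b c : R * R)
  (U U' : 'I_6 -> R * R) :
  nonzero2 a -> nonzero2 b -> nonzero2 c ->
  ~ same_line a b -> ~ same_line a c -> ~ same_line b c ->
  (forall i, nonzero2 (U i)) -> (forall i, nonzero2 (U' i)) ->
  (forall i : 'I_6, (i < 3)%N -> same_line (U i) a) ->
  (forall i : 'I_6, (3 <= i)%N -> same_line (U i) b) ->
  (forall i : 'I_6, (i < 3)%N -> same_line (U' i) a) ->
  (forall i : 'I_6, (3 <= i < 5)%N -> same_line (U' i) b) ->
  (forall i : 'I_6, (5 <= i)%N -> same_line (U' i) c) ->
  (exists P, Phi U P != 0) /\ (exists P, Phi U' P != 0) /\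
  exists2 lambda : R, 0 < lambda & forall P, Phi U' P = lambda * Phi U P.
Proof.
move=> ha hb hc nab nac nbc hU hU' hUa hUb hU'a hU'b hU'c.
pose L := fun i : 'I_6 => if (i < 3)%N then a else b.
pose L' := fun i : 'I_6 => if (i < 3)%N then a else if (i < 5)%N then b else c.
have hL i : nonzero2 (L i) by rewrite /L; case: ifP.
have hL' i : nonzero2 (L' i) by rewrite /L'; case: ifP => //; case: ifP.
have hUL i : same_line (U i) (L i).
  by rewrite /L; case: ltnP => h; [exact: hUa | exact: hUb].
have hUL' i : same_line (U' i) (L' i).
  rewrite /L'; case: ltnP => h; first exact: hU'a.
  case: ltnP => h2; first by apply: hU'b; rewrite h h2.
  exact: hU'c.
have hL0 (i : 'I_6) : (i < 3)%N -> L i = L ord0 by move=> hi; rewrite /L hi.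
have hL0' (i : 'I_6) : (i < 3)%N -> L' i = L' ord0 by move=> hi; rewrite /L' hi.
have hd (i : 'I_6) : (3 <= i)%N -> det2 (L ord0) (L i) != 0.
  by move=> hi; rewrite /L /= ltnNge hi /=; apply/eqP.
have hd' (i : 'I_6) : (3 <= i)%N -> det2 (L' ord0) (L' i) != 0.
  by move=> hi; rewrite /L' /= ltnNge hi /=; case: ifP => _; apply/eqP.
have hK := w_gt0 hL hUL hU hd.
have hK' := w_gt0 hL' hUL' hU' hd'.
split; first by exists P0; rewrite (@Phi_cross _ U L P0 hL hUL hL0 P0cross) gt_eqF.
split; first by exists P0; rewrite (@Phi_cross _ U' L' P0 hL' hUL' hL0' P0cross) gt_eqF.
exists ((\prod_i w U' L' i) / \prod_i w U L i); first by rewrite divr_gt0.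
move=> P; case: (dichot P) => [[x [y [xy hx hy hB]]] | hcr].
  by rewrite (Phi_zero ha (hU'a x hx) (hU'a y hy) xy hB) (Phi_zero ha (hUa x hx) (hUa y hy) xy hB) mulr0.
by rewrite (Phi_cross hL hUL hL0 hcr) (Phi_cross hL' hUL' hL0' hcr) divfK // gt_eqF.
Qed.
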